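(* Let $T:X\to X$ be a continuous map on a Hausdorff topological space $X$. The following are equivalent: (i) $T$ is quasi-rigid; (ii) $T$ is $\mathcal{F}(A)$-recurrent for some infinite set $A\subset\mathbb{N}_0$; (iii) $T$ is $\mathcal{F}$-recurrent for some Furstenberg family $\mathcal{F}$ which is a filter and has a countable base (i.e. there are $A_k\in\mathcal{F}$, $k\in\mathbb{N}$, such that every member of $\mathcal{F}$ contains some $A_k$). If moreover $X$ is second-countable, these are also equivalent to: (iv) $T$ is $\mathcal{F}$-recurrent for some Furstenberg family $\mathcal{F}$ with the finite intersection property.
   Context: A Furstenberg family is a collection $\mathcal{F}$ of subsets of $\mathbb{N}_0$ such that every $A\in\mathcal{F}$ is infinite, $B\in\mathcal{F}$ whenever $A\in\mathcal{F}$ and $A\subset B$, and $A\cap[n,\infty)\in\mathcal{F}$ for all $A\in\mathcal{F}$, $n\in\mathbb{N}$. $\mathcal{F}$ is a filter if it is hereditarily upward and $A\cap B\in\mathcal{F}$ for all $A,B\in\mathcal{F}$; it has the finite intersection property if every finite subcollection has non-empty intersection. For infinite $A\subset\mathbb{N}_0$, $\mathcal{F}(A)=\{B\subset\mathbb{N}_0:A\setminus B \text{ is finite}\}$. For $x\in X$ and $U\subset X$, $N(x,U)=\{n\in\mathbb{N}_0:T^nx\in U\}$. A point $x$ is $\mathcal{F}$-recurrent if $N(x,U)\in\mathcal{F}$ for every neighbourhood $U$ of $x$; $T$ is $\mathcal{F}$-recurrent if the set of $\mathcal{F}$-recurrent points is dense. $T$ is quasi-rigid if there exist a strictly increasing sequence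 $(n_k)$ of positive integers and a dense $Y\subset X$ with $T^{n_k}x\to x$ for every $x\in Y$. *)

(* Defs.v *)
From HB Require Import structures.
From mathcomp Require Import all_boot all_order all_algebra.
From mathcomp Require Import all_classical all_reals all_analysis.
Set Implicit Arguments. Unset Strict Implicit. Unset Printing Implicit Defensive.
Import Order.TTheory GRing.Theory Num.Theory.
Local Open Scope classical_set_scope.

Definition furstenberg_family (F : set (set nat)) : Prop :=
  [/\ (forall A, F A -> infinite_set A),
      (forall A B, F A -> A `<=` B -> F B) &
      (forall A (n : nat), F A -> (0 < n)%N -> F (A `&` [set k | (n <= k)%N]))].

Definition family_filter (F : set (set nat)) : Prop :=
  (forall A B, F A -> A `<=` B -> F B) /\
  (forall A B, F A -> F B -> F (A `&` B)).

Definition family_fip (F : set (set nat)) : Prop :=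
  forall (n : nat) (A : nat -> set nat),
    (forall i, (i < n)%N -> F (A i)) ->
    exists m : nat, forall i, (i < n)%N -> A i m.

Definition family_countable_base (F : set (set nat)) : Prop :=
  exists Ak : nat -> set nat,
    (forall k, F (Ak k)) /\ (forall B, F B -> exists k, Ak k `<=` B).

Definition cofinite_family (A : set nat) : set (set nat) :=
  [set B | finite_set (A `\` B)].

Definition return_set (X : Type) (T : X -> X) (x : X) (U : set X) : set nat :=
  [set n | U (iter n T x)].

Definition F_recurrent_point (X : topologicalType) (F : set (set nat))
  (T : X -> X) (x : X) : Prop :=
  forall U, nbhs x U -> F (return_set T x U).

Definition F_recurrent (X : topologicalType) (F : set (set nat)) (T : X -> X) : Prop :=
  dense [set x | F_recurrent_point F T x].

Definition quasi_rigid (X : topologicalType) (T : X -> X) : Prop :=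
  exists nk : nat -> nat,
    (forall k, (0 < nk k)%N) /\ (forall k, (nk k < nk k.+1)%N) /\
    exists Y : set X, dense Y /\
      forall x, Y x -> (fun k => iter (nk k) T x) @ \oo --> x.

(* Main.v *)
Require Import Defs.
From HB Require Import structures.
From mathcomp Require Import all_boot all_order all_algebra.
From mathcomp Require Import all_classical all_reals all_analysis.
From mathcomp Require Import zify.
Local Open Scope classical_set_scope.
Set Implicit Arguments. Unset Strict Implicit.

Lemma finite_nat_bounded (S : set nat) : finite_set S -> exists M, forall a, S a -> (a < M)%N.
Proof.
move=> /finite_fsetP[X ->]; exists (\max_(x <- finmap.enum_fset X) x).+1 => a /= aX.
rewrite ltnS; exact: (@leq_bigmax_seq _ _ xpredT id a).
Qed.

Lemma finite_lt (n : nat) : finite_set [set k | (k < n)%N].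
Proof. exact: finite_II. Qed.

Lemma infinite_big (S : set nat) m : infinite_set S -> exists n, (m < n)%N /\ S n.
Proof.
move=> hS; apply: contrapT => hn; apply: hS.
apply: (@sub_finite_set _ _ [set k | (k < m.+1)%N]); last exact: finite_lt.
move=> a Sa /=; rewrite ltnNge; apply/negP => ha; apply: hn; exists a; split => //.
Qed.

Lemma cvg_evt (X : topologicalType) (u : nat -> X) (x : X) :
  (forall U : set X, nbhs x U -> exists M, forall k, (M <= k)%N -> U (u k)) -> u @ \oo --> x.
Proof. move=> h U /h [M hM]; exists M => // k /=; exact: hM. Qed.

Lemma seq_build (G : nat -> set nat) :
  (forall k m, exists n, (m < n)%N /\ G k n) ->
  exists nk : nat -> nat, [/\ forall k, (0 < nk k)%N, forall k, (nk k < nk k.+1)%N &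
     forall k, G k (nk k)].
Proof.
move=> h.
have [f hf] : exists f : nat -> nat -> nat, forall k m, (m < f k m)%N /\ G k (f k m).
  by exists (fun k m => projT1 (cid (h k m))) => k m; case: (cid (h k m)).
pose nk := fix nk k := if k is k'.+1 then f k (nk k') else f 0 0.
exists nk; split.
- case=> [|k] /=; first by case: (hf 0 0).
  by case: (hf k.+1 (nk k)) => /(leq_trans _) -> //.
- by move=> k /=; case: (hf k.+1 (nk k)).
- by case=> [|k] /=; [case: (hf 0 0)|case: (hf k.+1 (nk k))].
Qed.

Section Cof.
Variable A : set nat.
Hypothesis hA : infinite_set A.

Lemma cof_furst : furstenberg_family (cofinite_family A).
Proof.
split.
- move=> B hB fB; apply: hA.
  apply: (@sub_finite_set _ _ ((A `\` B) `|` B)); last by rewrite finite_setU.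
  by move=> a Aa; case: (pselect (B a)) => ?; [right|left].
- move=> B C hB BC; apply: (sub_finite_set _ hB) => a [Aa nC]; by split => // /BC.
- move=> B n hB _; rewrite /cofinite_family /=.
  apply: (@sub_finite_set _ _ ((A `\` B) `|` [set k | (k < n)%N])); last by rewrite finite_setU; split => //; exact: finite_lt.
  move=> a [Aa nB]; case: (pselect (B a)) => Ba; [right|left] => //=.
  by rewrite ltnNge; apply/negP => na; apply: nB.
Qed.

Lemma cof_setT : cofinite_family A setT.
Proof. rewrite /cofinite_family /= setDT; exact: finite_set0. Qed.

Lemma cof_filter : family_filter (cofinite_family A).
Proof.
split; first by move=> B C hB BC; apply: (sub_finite_set _ hB) => a [Aa nC]; by split => // /BC.
move=> B C hB hC; apply: (@sub_finite_set _ _ ((A `\` B) `|` (A `\` C))); last by rewrite finite_setU.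
move=> a [Aa nBC]; case: (pselect (B a)) => Ba; [right|left] => //; split => // Ca; exact: nBC.
Qed.

Lemma cof_cb : family_countable_base (cofinite_family A).
Proof.
exists (fun k => A `&` [set i | (k <= i)%N]); split.
- move=> k; apply: (@sub_finite_set _ _ [set i | (i < k)%N]); last exact: finite_lt.
  by move=> a [Aa nB] /=; rewrite ltnNge; apply/negP => h; apply: nB.
- move=> B hB; have [M hM] := finite_nat_bounded hB; exists M => a [Aa /= Ma].
  apply: contrapT => nB; have := hM a (conj Aa nB); by rewrite ltnNge Ma.
Qed.

Lemma cof_fip : family_fip (cofinite_family A).
Proof.
move=> n B hB.
have hC : cofinite_family A [set m | forall i, (i < n)%N -> B i m].
  elim: n hB => [|n IH] hB.
    by apply: (sub_finite_set _ (finite_set0 nat)) => a [_ h]; apply: h.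
  have := (cof_filter.2 _ _ (IH (fun i hi => hB i (ltnW hi))) (hB n (ltnSn n))).
  move=> hh; apply: (sub_finite_set _ hh) => a [Aa h]; split => // -[h1 h2]; apply: h.
  move=> i; rewrite ltnS leq_eqVlt => /orP[/eqP->|hi] //; exact: h1.
case: cof_furst => hinf _ _; have [m [_ hm]] := infinite_big 0 (hinf _ hC).
by exists m.
Qed.
End Cof.
Lemma inc_ge (nk : nat -> nat) : (forall k, (nk k < nk k.+1)%N) -> forall k, (k <= nk k)%N.
Proof. move=> h; elim=> [|k IH] //; exact: leq_ltn_trans IH (h k). Qed.

Lemma dense_sub (X : topologicalType) (Y R : set X) : dense Y -> Y `<=` R -> dense R.
Proof. move=> hY YR O O0 oO; have [z [Oz Yz]] := hY O O0 oO; exists z; split => //; exact: YR. Qed.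

Section Main.
Variables (X : topologicalType) (T : X -> X).

Lemma P1 : quasi_rigid T -> exists A : set nat, infinite_set A /\ F_recurrent (cofinite_family A) T.
Proof.
move=> [nk [hpos [hinc [Y [hY hcv]]]]].
exists (range nk); split.
  move=> /finite_nat_bounded [M hM].
  have := hM (nk M) (ex_intro2 _ _ M I erefl).
  by rewrite ltnNge inc_ge.
apply: (dense_sub hY) => x Yx U hU.
have [M _ hM] := hcv x Yx U hU.
apply: (@sub_finite_set _ _ (nk @` [set k | (k < M)%N])); last exact/finite_image/finite_lt.
move=> a [[k _ <-] nN]; exists k => //=.
rewrite ltnNge; apply/negP => Mk; apply: nN; exact: (hM k Mk).
Qed.

Lemma P2 : (exists A : set nat, infinite_set A /\ F_recurrent (cofinite_family A) T) -> quasi_rigid T.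
Proof.
move=> [A [hA hR]].
have [nk [hpos hinc hG]] := @seq_build (fun _ => A) (fun k m => infinite_big m hA).
exists nk; split => //; split => //.
exists [set x | F_recurrent_point (cofinite_family A) T x]; split => // x hx.
apply: cvg_evt => U hU.
have [M hM] := finite_nat_bounded (hx U hU).
exists M => k Mk; apply: contrapT => nU.
have := hM (nk k) (conj (hG k) nU).
by rewrite ltnNge (leq_trans Mk (inc_ge hinc k)).
Qed.

Lemma P3 : (exists A : set nat, infinite_set A /\ F_recurrent (cofinite_family A) T) ->
  exists F : set (set nat), [/\ furstenberg_family F, family_filter F,
            family_countable_base F & F_recurrent F T].
Proof.
move=> [A [hA hR]]; exists (cofinite_family A); split => //.
exact: cof_furst. exact: cof_filter. exact: cof_cb.
Qed.

Lemma P5 : (exists A : set nat, infinite_set A /\ F_recurrent (cofinite_family A) T) ->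
  exists F : set (set nat), [/\ furstenberg_family F, family_fip F & F_recurrent F T].
Proof.
move=> [A [hA hR]]; exists (cofinite_family A); split => //.
exact: cof_furst. exact: cof_fip.
Qed.

Lemma P4 : (exists F : set (set nat), [/\ furstenberg_family F, family_filter F,
            family_countable_base F & F_recurrent F T]) -> quasi_rigid T.
Proof.
move=> [F [[hinf hup htr] [_ hI] [Ak [hAk hbase]] hR]].
pose B k := [set n | forall i, (i <= k)%N -> Ak i n].
have hB : forall k, F (B k).
  elim=> [|k IH].
    apply: hup (hAk 0) _ => n h i; rewrite leqn0 => /eqP ->; exact: h.
  apply: hup (hI _ _ IH (hAk k.+1)) _ => n [h1 h2] i.
  rewrite leq_eqVlt => /orP[/eqP->|hi] //; exact: h1.
have hex : forall k m, exists n, (m < n)%N /\ B k n.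
  move=> k m; have := hinf _ (htr _ m.+1 (hB k) isT).
  by move=> /(infinite_big 0) [n [_ [h1 h2]]]; exists n.
have [nk [hpos hinc hG]] := seq_build hex.
exists nk; split => //; split => //.
exists [set x | F_recurrent_point F T x]; split => // x hx.
apply: cvg_evt => U hU.
have [j hj] := hbase _ (hx U hU).
exists j => k jk; exact: hj _ (hG k j jk).
Qed.
End Main.

Lemma enum_basis (X : topologicalType) : @second_countable X ->
  exists e : nat -> set X, (forall n, open (e n)) /\
    (forall (x : X) (U : set X), nbhs x U -> exists j, e j x /\ e j `<=` U).
Proof.
move=> [B cB [Bo Bb]].
have [g gi] := countable_injP _ cB.
pose e n := match pselect (exists V, B V /\ g V = n) with
  | left h => projT1 (cid h) | right _ => set0 end.
exists e; split.
  move=> n; rewrite /e; case: pselect => [h|_]; last exact: open0.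
  by case: (cid h) => V [BV _] /=; exact: Bo.
move=> x U hU; have [V [BV Vx] VU] := Bb x U hU.
exists (g V); rewrite /e; case: pselect => [h|[]]; last by exists V.
case: (cid h) => W [BW gW] /=.
have -> : W = V by apply: gi => //; rewrite in_setE.
by [].
Qed.

Lemma P6 (X : topologicalType) (T : X -> X) : @second_countable X ->
  (exists F : set (set nat), [/\ furstenberg_family F, family_fip F & F_recurrent F T]) ->
  quasi_rigid T.
Proof.
move=> sc [F [[hinf hup htr] hfip hR]].
have [e [eo eb]] := enum_basis sc.
pose R := [set x | F_recurrent_point F T x].
have [[r Rr]|noR] := pselect (exists r, R r); last first.
  exists (fun k => k.+1); split => //; split => //.
  exists R; split => // x Rx; exfalso; apply: noR; by exists x.
pose y i := match pselect (exists z, e i z /\ R z) with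
  | left h => projT1 (cid h) | right _ => r end.
have yR : forall i, R (y i).
  by move=> i; rewrite /y; case: pselect => // h; case: (cid h) => z [].
have ye : forall i z, e i z -> R z -> e i (y i).
  move=> i z ez Rz; rewrite /y; case: pselect => [h|[]]; last by exists z.
  by case: (cid h) => w [].
pose V i j := if pselect (e j (y i)) then e j else setT.
have hV : forall i j, nbhs (y i) (V i j).
  move=> i j; rewrite /V; case: pselect => h; last exact: filterT.
  by apply: open_nbhs_nbhs; split.
pose G k n := forall i j, (i <= k)%N -> (j <= k)%N -> e j (y i) -> e j (iter n T (y i)).
have hex : forall k m, exists n, (m < n)%N /\ G k n.
  move=> k m.
  pose Af p := return_set T (y (p %/ k.+1)) (V (p %/ k.+1) (p %% k.+1)) `&` [set n | (m.+1 <= n)%N].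
  have [n hn] := hfip (k.+1 * k.+1) Af (fun p _ => htr _ m.+1 (yR _ _ (hV _ _)) isT).
  have h0 : (0 < k.+1 * k.+1)%N by rewrite muln_gt0.
  exists n; split; first by case: (hn 0 h0).
  move=> i j ik jk eji.
  have hp : (i * k.+1 + j < k.+1 * k.+1)%N.
    by nia.
  have := hn _ hp; rewrite /Af /= divnMDl // modnMDl divn_small ?modn_small ?ltnS // addn0.
  move=> [hh _]; move: hh; rewrite /V /return_set /=; by case: (pselect (e j (y i))).
have [nk [hpos hinc hG]] := seq_build hex.
exists nk; split => //; split => //.
exists (range y); split.
  move=> O [z Oz] oO; have [w [Ow Rw]] := hR O (ex_intro _ z Oz) oO.
  have [j [ejw ejO]] := eb w O (open_nbhs_nbhs (conj oO Ow)).
  by exists (y j); split; [exact/ejO/(ye _ _ ejw Rw)|exists j].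
move=> _ [i _ <-]; apply: cvg_evt => U hU.
have [j [eji ejU]] := eb _ _ hU.
exists (maxn i j) => k hk; apply/ejU/hG => //.
  exact: leq_trans (leq_maxl _ _) hk.
exact: leq_trans (leq_maxr _ _) hk.
Qed.

Unset Implicit Arguments.

Theorem mainTheorem9 (X : topologicalType) (T : X -> X) :
  hausdorff_space X -> continuous T ->
  [/\ quasi_rigid T <->
        (exists A : set nat, infinite_set A /\ F_recurrent (cofinite_family A) T),
      quasi_rigid T <->
        (exists F : set (set nat), [/\ furstenberg_family F, family_filter F,
            family_countable_base F & F_recurrent F T]) &
      @second_countable X ->
        (quasi_rigid T <->
           (exists F : set (set nat), [/\ furstenberg_family F, family_fip F &
               F_recurrent F T]))].
Proof.
move=> _ _; split.
- split; [exact: P1 | exact: P2].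
- split; [move=> h; exact: P3 (P1 h) | exact: P4].
- move=> sc; split; [move=> h; exact: P5 (P1 h) | exact: P6].
Qed.
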